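(* Let $\Omega$ be a finite token alphabet and let $R$ be a 0-th order acceptance probability distribution on indices $\{1,\dots,|\Omega|\}$. Fix a number of drafted tokens $k$, let $\tau^*_k$ be the optimal drafting tree with $k+1$ vertices, and let $d=\max_{\mathbf{j}\in\tau^*_k}\max_i\{i: i\in\mathbf{j}\}$ be the maximum index appearing in $\tau^*_k$. Let $p_{res}=1-\sum_{i=1}^d R(i)$ and define the distribution $R^{res}$ on $\{1,\dots,d+1\}$ by $R^{res}(i)=R(i)$ for $i\le d$ and $R^{res}(d+1)=p_{res}$. Then for every integer $m\ge \frac{p_{res}}{\min_{i\le d}R(i)}$, $$\mathbb{E}[\#\text{ generated tokens}]\le \frac{\log(d+m)+\log(k+1)}{H(R^{res})+p_{res}\log m}.$$
   Context: A drafting tree is a finite, prefix-closed set of finite index sequences $\mathbf{j}=(j_1,\dots,j_l)$, $j_i\in\{1,\dots,|\Omega|\}$, containing the empty sequence (root); each non-root vertex is a drafted token, and $j_i$ indexes which drafted alternative is taken at depth $i$. Under the 0-th order assumption, at each generated position the index of the accepted drafted alternative is drawn independently from $R$, so vertex $\mathbf{j}$ is accepted with probability $R(\mathbf{j})=\prod_{i}R(j_i)$. Generation follows accepted vertices until no child in the tree is accepted, and then one more token is sampled from the target model; the number of generated tokens is the number of accepted drafted tokens plus one. The optimal tree with $k+1$ vertices maximizes $\sum_{\mathbf{j}\in\tau}R(\mathbf{j})$ over trees $\tau$ with $|\tau|=k+1$. $H$ denotes Shannon entropy, with $\log$ in the same base. *)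

(* Defs.v *)
From HB Require Import structures.
From mathcomp Require Import all_boot all_order all_algebra.
From mathcomp Require Import reals exp.
Set Implicit Arguments. Unset Strict Implicit. Unset Printing Implicit Defensive.
Import Order.TTheory GRing.Theory Num.Theory.
Local Open Scope ring_scope.

Definition is_drafting_tree (n : nat) (t : seq (seq nat)) : bool :=
  [&& uniq t, [::] \in t,
      all (fun s => all (fun j => (0 < j <= n)%N) s) t &
      all (fun s => all (fun i => take i s \in t) (iota 0 (size s))) t].

Section Defs.
Variable R : realType.

(* R(j) = prod_i R(j_i): probability that vertex j is accepted (0-th order). *)
Definition path_prob (Rd : nat -> R) (s : seq nat) : R := \prod_(j <- s) Rd j.

Definition tree_value (Rd : nat -> R) (t : seq (seq nat)) : R :=
  \sum_(s <- t) path_prob Rd s.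

(* E[# generated tokens] = 1 + E[# accepted drafted tokens]
   = sum over vertices (root included, R(root)=1) of P(vertex accepted),
   by linearity of expectation. *)
Definition expected_tokens (Rd : nat -> R) (t : seq (seq nat)) : R :=
  tree_value Rd t.

Definition optimal_tree (n k : nat) (Rd : nat -> R) (t : seq (seq nat)) : Prop :=
  [/\ is_drafting_tree n t, size t = k.+1 &
      forall t', is_drafting_tree n t' -> size t' = k.+1 ->
                 tree_value Rd t' <= tree_value Rd t].

Definition plogp (x : R) : R := if x == 0 then 0 else x * ln x.

End Defs.

Definition max_index (t : seq (seq nat)) : nat :=
  \max_(s <- t) \max_(j <- s) j.

(* Main.v *)
Require Import Defs.
From HB Require Import structures.
From mathcomp Require Import all_boot all_order all_algebra.
From mathcomp Require Import reals exp.
From mathcomp Require Import ring lra.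
Import Order.TTheory GRing.Theory Num.Theory.
Set Implicit Arguments. Unset Strict Implicit. Unset Printing Implicit Defensive.
Local Open Scope ring_scope.

Section Aux.
Variable R : realType.

Lemma plogpM (x y : R) : 0 <= x -> 0 <= y ->
  plogp (x * y) = x * plogp y + y * plogp x.
Proof.
rewrite /plogp le0r => /orP[/eqP->|x0]; first by rewrite mul0r eqxx mul0r mulr0 addr0.
rewrite le0r => /orP[/eqP->|y0]; first by rewrite mulr0 eqxx mulr0 mul0r addr0.
rewrite mulf_eq0 !gt_eqF //= lnM ?posrE //; lra.
Qed.

Lemma gibbs_pt (c w x : R) : 0 < c -> 0 <= w -> 0 <= x -> (0 < w -> 0 < x) ->
  w * ln x - plogp w <= x / c - w + w * ln c.
Proof.
move=> c0; rewrite le0r => /orP[/eqP->|w0] x0 hx.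
  by rewrite /plogp eqxx !mul0r subr0 !subr0 addr0 divr_ge0 // ltW.
have {}x0 := hx w0.
have wc0 : 0 < w * c by rewrite mulr_gt0.
have h := @le_ln1Dx R (x / (w * c) - 1).
rewrite addrCA subrr addr0 in h.
have ha : 0 < x / (w * c) := divr_gt0 x0 wc0.
have : -1 < x / (w * c) - 1 by lra.
move=> /h.
rewrite ln_div ?posrE // lnM ?posrE // => h2.
have h3 := ler_wpM2l (ltW w0) h2.
have e : w * (x / (w * c) - 1) = x / c - w.
  by field; rewrite !gt_eqF.
rewrite e in h3.
rewrite /plogp gt_eqF //.
lra.
Qed.


Lemma sum_children (f : seq nat -> R) (t : seq (seq nat)) (d : nat) :
  uniq t ->
  (forall s, s \in t -> forall j, j \in s -> (0 < j <= d)%N) ->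
  (forall s, s \in t -> forall i, (i < size s)%N -> take i s \in t) ->
  \sum_(v <- t) \sum_(1 <= a < d.+1 | rcons v a \in t) f (rcons v a) =
  \sum_(u <- t | u != [::]) f u.
Proof.
move=> ut hj hp.
transitivity (\sum_(u <- [seq rcons v a | v <- t, a <- iota 1 d] | u \in t) f u).
  have gen : forall s, \sum_(v <- s) \sum_(1 <= a < d.+1 | rcons v a \in t) f (rcons v a)
     = \sum_(u <- [seq rcons v a | v <- s, a <- iota 1 d] | u \in t) f u.
    elim => [|v s IH]; first by rewrite !big_nil.
    by rewrite /= big_cat big_cons IH big_map /index_iota subSS subn0.
  exact: gen.
rewrite -big_filter -[RHS]big_filter; apply: perm_big; apply: uniq_perm.
- rewrite filter_uniq // allpairs_uniq // ?iota_uniq //.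
  by move=> [v a] [v' a'] _ _ /= /rcons_inj.
- by rewrite filter_uniq.
move=> u; rewrite !mem_filter.
case: (lastP u) => [|v a].
  rewrite eqxx /= andbC; case: allpairsP => //= -[[v a] [_ _]] /=.
  by case: v.
have -> : (rcons v a != [::]) = true by case: v.
case ht: (rcons v a \in t); rewrite ?andbF //=.
apply/allpairsP; exists (v, a) => /=; split => //.
  have := hp _ ht (size v); rewrite size_rcons ltnSn -cats1 take_size_cat //.
  by apply.
rewrite mem_iota add1n ltnS; apply: (hj _ ht).
by rewrite mem_rcons mem_head.
Qed.


Definition Ex (t : seq (seq nat)) d (P : seq nat -> R) (Rd : nat -> R) (po xo : R)
  (g : R -> R -> R) :=
  \sum_(v <- t) (\sum_(1 <= a < d.+1 | rcons v a \notin t) g (P v * Rd a) 1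
                 + g (P v * po) xo).

Lemma ExD t d P Rd po xo g1 g2 :
  Ex t d P Rd po xo (fun w x => g1 w x + g2 w x) =
  Ex t d P Rd po xo g1 + Ex t d P Rd po xo g2.
Proof.
rewrite /Ex -big_split; apply: eq_bigr => v _ /=.
by rewrite big_split /= addrACA.
Qed.

Lemma ExZ t d P Rd po xo (c : R) g :
  Ex t d P Rd po xo (fun w x => c * g w x) = c * Ex t d P Rd po xo g.
Proof.
rewrite /Ex mulr_sumr; apply: eq_bigr => v _ /=.
by rewrite mulrDr mulr_sumr.
Qed.

Lemma Ex_ext t d P Rd po xo g1 g2 : (forall w x, g1 w x = g2 w x) ->
  Ex t d P Rd po xo g1 = Ex t d P Rd po xo g2.
Proof.
move=> e; rewrite /Ex; apply: eq_bigr => v _.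
by rewrite e; congr (_ + _); apply: eq_bigr => a _.
Qed.

Lemma Ex_le t d P Rd po xo g1 g2 :
  (forall v a, v \in t -> (1 <= a <= d)%N -> g1 (P v * Rd a) 1 <= g2 (P v * Rd a) 1) ->
  (forall v, v \in t -> g1 (P v * po) xo <= g2 (P v * po) xo) ->
  Ex t d P Rd po xo g1 <= Ex t d P Rd po xo g2.
Proof.
move=> h1 h2; rewrite /Ex big_seq [X in _ <= X]big_seq.
apply: ler_sum => v vt; apply: lerD; last exact: h2.
rewrite big_nat_cond [X in _ <= X]big_nat_cond.
apply: ler_sum => a /andP[/andP[a1 ad] _]; apply: h1 => //.
by rewrite a1 -ltnS.
Qed.

Lemma sum_const_seq (T : Type) (s : seq T) (x : R) : \sum_(v <- s) x = x *+ size s.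
Proof. by elim: s => [|? ? IH]; rewrite ?big_nil ?big_cons ?IH ?mulrS. Qed.

End Aux.
Theorem lemma2 (R : realType) (Omega : finType) (Rd : nat -> R) (k : nat)
    (t : seq (seq nat)) (m : nat) :
  (forall i, (0 < i <= #|Omega|)%N -> 0 <= Rd i) ->
  \sum_(1 <= i < #|Omega|.+1) Rd i = 1 ->
  optimal_tree #|Omega| k Rd t ->
  let d := max_index t in
  let pres := 1 - \sum_(1 <= i < d.+1) Rd i in
  let H_res := - (\sum_(1 <= i < d.+1) plogp (Rd i)) - plogp pres in
  (* m >= pres / min_{i <= d} R(i) *)
  (forall i, (1 <= i <= d)%N -> pres <= m%:R * Rd i) ->
  expected_tokens Rd t * (H_res + pres * ln (m%:R : R))
    <= ln ((d + m)%:R : R) + ln ((k + 1)%:R : R).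
Proof.
move=> Rge0 Rsum [tree sz _] d pres H_res hm.
move: tree => /and4P [ut troot /allP tall /allP tpref].
set n := #|Omega| in Rge0 Rsum tall.
have hjn : forall s, s \in t -> forall j, j \in s -> (0 < j <= n)%N.
  by move=> s st j js; have /allP := tall s st; apply.
have hjd : forall s, s \in t -> forall j, j \in s -> (0 < j <= d)%N.
  move=> s st j js; rewrite (andP (hjn s st j js)).1 /=.
  apply: leq_trans (leq_bigmax_seq (F := fun j => j) j js isT) _.
  exact: (leq_bigmax_seq (F := fun s => \max_(j <- s) j) s st isT).
have hp : forall s, s \in t -> forall i, (i < size s)%N -> take i s \in t.
  move=> s st i ilt; have /allP := tpref s st; apply.
  by rewrite mem_iota add0n.
have dn : (d <= n)%N.
  apply/bigmax_leqP_seq => s st _; apply/bigmax_leqP_seq => j js _.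
  by have /andP[] := hjn s st j js.
have Rd0 : forall i, (1 <= i <= d)%N -> 0 <= Rd i.
  move=> i /andP[i1 id]; apply: Rge0; rewrite i1 /=; exact: leq_trans id dn.
have pres0 : 0 <= pres.
  rewrite /pres subr_ge0 -Rsum [X in _ <= X](big_cat_nat _ (n := d.+1)) //= ?ltnS //.
  rewrite -[X in X <= _]addr0. rewrite lerD2l big_nat_cond sumr_ge0 // => i /andP[/andP[i1 i2] _].
  by apply: Rge0; rewrite ltnS in i2; rewrite i2 andbT; apply: (leq_ltn_trans (leq0n d) i1).
set P := path_prob Rd.
have P0 : forall v, v \in t -> 0 <= P v.
  move=> v vt; rewrite /P /path_prob big_seq; apply: prodr_ge0 => j js.
  by apply: Rge0; exact: hjn vt j js.
have Prc : forall v a, P (rcons v a) = P v * Rd a.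
  by move=> v a; rewrite /P /path_prob -cats1 big_cat big_seq1.
have Pnil : P [::] = 1 by rewrite /P /path_prob big_nil.
have sumR : \sum_(1 <= i < d.+1) Rd i + pres = 1 by rewrite /pres addrC subrK.
have Edef : expected_tokens Rd t = \sum_(v <- t) P v by [].
case: (boolP ((m == 0%N) && (d == 0%N))) => [/andP[/eqP m0 /eqP d0] | nd].
  have -> : H_res = 0.
    rewrite /H_res /pres d0 !big_geq // (_ : 1 - 0 = 1 :> R) ?subr0 //.
    rewrite /plogp oner_eq0 ln1 mulr0; lra.

  have l0 : ln (0%:R : R) = 0 by rewrite ln0.
  rewrite m0 d0 l0 mulr0 addr0 mulr0 add0r ln_ge0 //.
  by rewrite ler1n addn1.
have dm0 : (0 < d + m)%N.
  by rewrite addn_gt0 !lt0n; move: nd; case: (d == 0%N); case: (m == 0%N).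
set c : R := ((k + 1) * (d + m))%:R.
have c0 : 0 < c by rewrite /c ltr0n muln_gt0 addn1 dm0.
set Ex' := @Ex R t d P Rd pres m%:R.
have stA : Ex' (fun w x => w * ln x - plogp w) <=
           Ex' (fun w x => c^-1 * x + (ln c - 1) * w).
  apply: Ex_le.
    move=> v a vt ad.
    have w0 : 0 <= P v * Rd a := mulr_ge0 (P0 v vt) (Rd0 a ad).
    have := gibbs_pt c0 w0 ler01 (fun _ => ltr01).
    rewrite mulrC; lra.
  move=> v vt.
  have w0 : 0 <= P v * pres := mulr_ge0 (P0 v vt) pres0.
  have hx : 0 < P v * pres -> 0 < (m%:R : R).
    move=> wp; rewrite ltr0n lt0n; apply/negP => /eqP m0.
    have d1 : (0 < 1 <= d)%N by move: nd; rewrite m0 eqxx /= lt0n.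
    have := hm 1%N d1; rewrite m0 mul0r => pl.
    have p0 : pres = 0 by apply/eqP; rewrite eq_le pl pres0.
    by rewrite p0 mulr0 ltxx in wp.
  have := gibbs_pt c0 w0 (ler0n _ m) hx.
  rewrite [_ / c]mulrC; lra.
have stB : Ex' (fun w x => c^-1 * x + (ln c - 1) * w) =
           c^-1 * Ex' (fun w x => x) + (ln c - 1) * Ex' (fun w x => w).
  by rewrite /Ex' ExD !ExZ.
have SC := fun f : seq nat -> R => sum_children f ut hjd hp.
have Sroot : forall f : seq nat -> R,
    \sum_(v <- t) f v = f [::] + \sum_(u <- t | u != [::]) f u.
  by move=> f; rewrite (bigD1_seq [::] troot ut).
have stC : Ex' (fun w x => w) = 1.
  rewrite /Ex' /Ex.
  transitivity (\sum_(v <- t) P v -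
     \sum_(v <- t) \sum_(1 <= a < d.+1 | rcons v a \in t) P (rcons v a)).
    rewrite -sumrB; apply: eq_bigr => v _.
    have e1 : \sum_(1 <= a < d.+1 | rcons v a \in t) P (rcons v a) =
              \sum_(1 <= a < d.+1 | rcons v a \in t) P v * Rd a.
      by apply: eq_bigr => a _; rewrite Prc.
    have e2 : \sum_(1 <= a < d.+1) P v * Rd a =
       \sum_(1 <= a < d.+1 | rcons v a \in t) P v * Rd a +
       \sum_(1 <= a < d.+1 | rcons v a \notin t) P v * Rd a := bigID _ _ _.
    have e3 : P v * \sum_(1 <= i < d.+1) Rd i + P v * pres = P v.
      by rewrite -mulrDr sumR mulr1.
    rewrite e1; rewrite mulr_sumr in e3; lra.
  by rewrite SC Sroot Pnil addrK.
have pl1 : plogp (1 : R) = 0 by rewrite /plogp oner_eq0 ln1 mulr0.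
have stD : Ex' (fun w x => plogp w) = - (expected_tokens Rd t * H_res).
  rewrite /Ex' /Ex.
  transitivity (\sum_(v <- t) plogp (P v) - \sum_(v <- t) P v * H_res -
     \sum_(v <- t) \sum_(1 <= a < d.+1 | rcons v a \in t) plogp (P (rcons v a))).
    rewrite -!sumrB big_seq [RHS]big_seq; apply: eq_bigr => v vt.
    have e1 : \sum_(1 <= a < d.+1 | rcons v a \in t) plogp (P (rcons v a)) =
              \sum_(1 <= a < d.+1 | rcons v a \in t) plogp (P v * Rd a).
      by apply: eq_bigr => a _; rewrite Prc.
    have e2 : \sum_(1 <= a < d.+1) plogp (P v * Rd a) =
       \sum_(1 <= a < d.+1 | rcons v a \in t) plogp (P v * Rd a) +
       \sum_(1 <= a < d.+1 | rcons v a \notin t) plogp (P v * Rd a) := bigID _ _ _.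
    have e4 : \sum_(1 <= a < d.+1) plogp (P v * Rd a) =
       P v * \sum_(1 <= a < d.+1) plogp (Rd a) + plogp (P v) * \sum_(1 <= a < d.+1) Rd a.
      rewrite !mulr_sumr -big_split; apply: eq_big_nat => a ad /=.
      by rewrite plogpM ?P0 ?Rd0 // [Rd a * _]mulrC.
    have e5 : plogp (P v * pres) = P v * plogp pres + pres * plogp (P v).
      by rewrite plogpM ?P0.
    have e6 : P v * H_res = - (P v * \sum_(1 <= a < d.+1) plogp (Rd a)) - P v * plogp pres.
      by rewrite /H_res mulrBr mulrN.
    have e7 : plogp (P v) * \sum_(1 <= a < d.+1) Rd a + plogp (P v) * pres = plogp (P v).
      by rewrite -mulrDr sumR mulr1.
    rewrite e1; lra.
  by rewrite (SC (fun u => plogp (P u))) (Sroot (fun u => plogp (P u))) /= Pnil pl1 Edef mulr_suml; lra.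
have stE : Ex' (fun w x => w * ln x) = expected_tokens Rd t * pres * ln (m%:R : R).
  rewrite /Ex' /Ex Edef !mulr_suml; apply: eq_bigr => v _.
  by rewrite big1 ?add0r // => a _; rewrite ln1 mulr0.
have stF : Ex' (fun w x => x) <= c.
  rewrite /Ex' /Ex.
  apply: (@le_trans _ _ (\sum_(v <- t) ((d + m)%:R : R))).
    apply: ler_sum => v _; rewrite natrD lerD2r.
    have e2 : \sum_(1 <= a < d.+1) (1 : R) =
       \sum_(1 <= a < d.+1 | rcons v a \in t) (1 : R) +
       \sum_(1 <= a < d.+1 | rcons v a \notin t) (1 : R) := bigID _ _ _.
    rewrite sumr_const_nat subSS subn0 in e2.
    have : 0 <= \sum_(1 <= a < d.+1 | rcons v a \in t) (1 : R).
      by apply: sumr_ge0 => a _; exact: ler01.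
    lra.
  by rewrite sum_const_seq sz /c -mulrnA mulnC addn1.

have eA : expected_tokens Rd t * (H_res + pres * ln (m%:R : R)) =
          Ex' (fun w x => w * ln x - plogp w).
  have -> : Ex' (fun w x => w * ln x - plogp w) =
            Ex' (fun w x => w * ln x + (-1) * plogp w).
    by apply: Ex_ext => w x; rewrite mulN1r.
  rewrite /Ex' ExD ExZ -/Ex' stD stE; lra.
have eA' : expected_tokens Rd t * (H_res + pres * ln (m%:R : R)) <=
          Ex' (fun w x => w * ln x - plogp w) by rewrite eA.

apply: le_trans eA' _; apply: le_trans stA _; rewrite stB stC mulr1.
have : c^-1 * Ex' (fun w x => x) <= 1 by rewrite mulrC ler_pdivrMr // mul1r.
have lc : ln c = ln (d + m)%:R + ln (k + 1)%:R.
  by rewrite /c natrM lnM ?posrE ?ltr0n ?addn1 // addrC.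
lra.
Qed.
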